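(* Let $G$ be a connected graph with $\mu_t(G)=|\mathcal{S}(G)|$, and let $\{C_1,\dots,C_k\}$ be the partition of $\mathcal{S}(G)$ into true twin equivalence classes. Then for every integer $n\ge 2$, $$\mu_t(G\,\Box\,K_n)=\sum_{i=1}^{k}\max\{|C_i|,n\}.$$
   Context: All graphs are finite, simple and undirected; $K_n$ is the complete graph on $n$ vertices and $N_G[v]$ the closed neighborhood of $v$. The Cartesian product $G\,\Box\,H$ has vertex set $V(G)\times V(H)$, with $(x,y)$ adjacent to $(x',y')$ iff either $x=x'$ and $yy'\in E(H)$, or $xx'\in E(G)$ and $y=y'$. Let $F$ be a connected graph and $X\subseteq V(F)$. Two vertices $u,v\in V(F)$ are $X$-visible if there exists a shortest $u,v$-path in $F$ none of whose internal vertices belongs to $X$. $X$ is a total mutual-visibility set of $F$ if every two vertices of $F$ are $X$-visible (the empty set is allowed). $\mu_t(F)$ is the maximum cardinality of a total mutual-visibility set of $F$. A vertex is simplicial if its neighbors induce a complete graph; $\mathcal{S}(G)$ is the set of simplicial vertices of $G$. Two simplicial vertices $g,g'$ are in the same true twin class iff $N_G[g]=N_G[g']$. *)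

(* Defs.v *)
(* Finite simple graphs as a symmetric irreflexive rel on a finType. *)
From mathcomp Require Import all_boot.
Set Implicit Arguments. Unset Strict Implicit. Unset Printing Implicit Defensive.

Section Graphs.
Variable T : finType.
Variable e : rel T.

Definition connected_graph : Prop := forall u v : T, connect e u v.

(* A u,v-walk is a sequence p with u :: p an e-path ending in v; its length is size p. *)
Definition is_walk (u v : T) (p : seq T) : bool := path e u p && (last u p == v).

Definition is_shortest (u v : T) (p : seq T) : Prop :=
  is_walk u v p /\ forall q, is_walk u v q -> size p <= size q.

(* internal vertices of the walk u :: p (all but the two endpoints) *)
Definition internal (p : seq T) : seq T := take (size p).-1 p.

Definition X_visible (X : {set T}) (u v : T) : Prop :=
  exists p, is_shortest u v p /\ all (fun x => x \notin X) (internal p).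

Definition total_mutual_visibility_set (X : {set T}) : Prop :=
  forall u v : T, X_visible X u v.

Definition mu_t_is (m : nat) : Prop :=
  (exists X : {set T}, total_mutual_visibility_set X /\ #|X| = m) /\
  (forall X : {set T}, total_mutual_visibility_set X -> #|X| <= m).

Definition closed_nbhd (v : T) : {set T} := [set x | (x == v) || e v x].

Definition simplicial (v : T) : bool :=
  [forall x, forall y, (e v x && e v y && (x != y)) ==> e x y].

Definition simplicial_set : {set T} := [set v | simplicial v].

Definition twin_classes : {set {set T}} :=
  [set [set g' in simplicial_set | closed_nbhd g' == closed_nbhd g]
  | g in simplicial_set].

End Graphs.

Definition cart_Kn (T : finType) (e : rel T) (n : nat) : rel (T * 'I_n) :=
  fun a b => ((a.1 == b.1) && (a.2 != b.2)) || (e a.1 b.1 && (a.2 == b.2)).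
Arguments cart_Kn {T} e n.

(* Main.v *)
Require Import Defs.
From mathcomp Require Import all_boot zify.
Set Implicit Arguments. Unset Strict Implicit. Unset Printing Implicit Defensive.

Lemma internal_rcons (T : finType) (s : seq T) x : internal (rcons s x) = s.
Proof. by rewrite /internal size_rcons /= -cats1 take_size_cat. Qed.

Section G.
Variable T : finType.
Variable e : rel T.
Hypothesis e_sym : symmetric e.

Lemma shortest_nonsimp a b s1 x z r :
  is_shortest e a b (s1 ++ x :: z :: r) -> ~~ simplicial e x.
Proof.
case=> /andP[]; rewrite cat_path last_cat /= => /and4P[p1 eyx exz pr] /eqP lb hmin.
apply/negP=> /forallP /(_ (last a s1)) /forallP /(_ z).
rewrite (e_sym x (last a s1)) eyx exz /=.
have [yz|nyz] := eqVneq (last a s1) z => /= [_|eyz].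
- have := hmin (s1 ++ r); rewrite /is_walk cat_path last_cat yz pr lb p1 eqxx.
  by rewrite !size_cat /= => /(_ isT); lia.
- have := hmin (s1 ++ z :: r); rewrite /is_walk cat_path last_cat /= eyz pr lb p1 eqxx.
  by rewrite !size_cat /= => /(_ isT); lia.
Qed.

Lemma internal_split (q : seq T) x : x \in internal q ->
  exists s1 z r, q = s1 ++ x :: z :: r.
Proof.
case/lastP: q => [|q0 w]; first by [].
rewrite internal_rcons => /splitPr [s1 s2].
case: s2 => [|z r]; first by exists s1, w, [::]; rewrite rcons_cat.
by exists s1, z, (rcons r w); rewrite rcons_cat.
Qed.

Lemma shortest_internal a b q : is_shortest e a b q ->
  all (fun x => ~~ simplicial e x) (internal q).
Proof.
move=> hs; apply/allP=> x /internal_split [s1 [z [r eq]]].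
by rewrite eq in hs; exact: shortest_nonsimp hs.
Qed.

Lemma exists_shortest a b : connect e a b -> exists q, is_shortest e a b q.
Proof.
move=> /connectP [p pp lp].
pose P m := [exists t : m.-tuple T, is_walk e a b t].
have exP : exists m, P m.
  by exists (size p); apply/existsP; exists (in_tuple p); rewrite /is_walk /=; apply/andP; split=> //; apply/eqP.
case: (ex_minnP exP) => m /existsP [t wt] hmin.
exists t; split => // q wq; rewrite size_tuple; apply: hmin.
by apply/existsP; exists (in_tuple q).
Qed.

Lemma simp_twins a b : simplicial e a -> simplicial e b -> e a b ->
  closed_nbhd e a = closed_nbhd e b.
Proof.
have H : forall a b, simplicial e a -> e a b -> closed_nbhd e a \subset closed_nbhd e b.
  move=> a' b' sa eab; apply/subsetP=> x; rewrite !inE.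
  case/orP=> [/eqP->|eax]; first by rewrite e_sym eab orbT.
  have [->|nxb] := eqVneq x b'; first by [].
  move/forallP: sa => /(_ x) /forallP /(_ b'); rewrite eax eab nxb /= => exb.
  by rewrite e_sym exb.
move=> sa sb eab; apply/eqP; rewrite eqEsubset H //= H //; first by rewrite e_sym.
Qed.
End G.

Section H.
Variable T : finType.
Variable e : rel T.
Hypothesis e_sym : symmetric e.
Variable n : nat.
Local Notation H := (cart_Kn e n).

Definition lift (i : 'I_n) (q : seq T) := map (fun g => (g, i)) q.

Lemma lift_path a i q : path e a q -> path H (a, i) (lift i q).
Proof.
elim: q a => //= x q IH a /andP[eax pq].
by rewrite IH // andbT /cart_Kn /= eax eqxx orbT.
Qed.

Lemma last_lift a i q : last (a, i) (lift i q) = (last a q, i).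
Proof. by rewrite /lift (last_map (fun g => (g, i))). Qed.

Lemma lift_walk a b i q : is_walk e a b q -> is_walk H (a, i) (b, i) (lift i q).
Proof. by case/andP=> pq /eqP lq; rewrite /is_walk lift_path // last_lift lq eqxx. Qed.

Lemma internal_map (A B : finType) (f : A -> B) s : internal (map f s) = map f (internal s).
Proof. by rewrite /internal map_take size_map. Qed.

Definition kk (x l : T * 'I_n) (p : seq (T * 'I_n)) :=
  if x.2 != l.2 then 1 else if all (fun y => y.2 == l.2) p then 0 else 2.

Lemma walk_lb p x : path H x p -> exists q,
  [/\ path e x.1 q, last x.1 q = (last x p).1 & size q + kk x (last x p) p <= size p].
Proof.
elim: p x => [|y p IH] x /=.
  by move=> _; exists [::]; rewrite /kk eqxx.
case/andP=> hxy /IH [q [pq lq sq]].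
move: hxy; rewrite /cart_Kn; case/orP=> /andP[h1 h2].
- exists q; rewrite (eqP h1); split=> //.
  move: sq; rewrite /kk /=.
  case hA: (x.2 == (last y p).2); case hB: (y.2 == (last y p).2) => /=.
  + by move: h2; rewrite (eqP hA) (eqP hB) eqxx.
  + lia.
  + by case: ifP => _; lia.
  + lia.
- exists (y.1 :: q); rewrite /= h1 pq; split=> //.
  move: sq; rewrite /kk /= (eqP h2).
  by case: (y.2 == _) => /=; [case: ifP => _; lia | lia].
Qed.

Lemma path_layer p x : path H x p -> all (fun y => y.2 == x.2) p ->
  path e x.1 (map fst p).
Proof.
elim: p x => //= y p IH x /andP[hxy pp] /andP[/eqP yx ap].
rewrite IH; last by rewrite yx.
2: by [].
rewrite andbT.
move: hxy; rewrite /cart_Kn yx eqxx /= andbF /=.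
by case/andP.
Qed.

Lemma same_layer u v i p : is_shortest H (u, i) (v, i) p ->
  all (fun y => y.2 == i) p /\ is_shortest e u v (map fst p).
Proof.
case=> /andP[pp /eqP lp] hmin.
have [q [pq lq sq]] := walk_lb pp.
have wq : is_walk e u v q by rewrite /is_walk pq lq lp eqxx.
have := hmin _ (lift_walk i wq); rewrite size_map => spq.
have hk : kk (u, i) (last (u, i) p) p = 0 by apply/eqP; rewrite -leqn0 -(leq_add2l (size q)) addn0; exact: leq_trans sq spq.
have ha : all (fun y => y.2 == i) p.
  by move: hk; rewrite lp /kk /= eqxx /=; case: ifP.
split=> //; split.
  rewrite /is_walk (path_layer pp) //.
  by rewrite /=; apply/eqP; rewrite -[u]/((u, i).1) last_map lp.
move=> q' wq'; have := hmin _ (lift_walk i wq'); by rewrite !size_map.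
Qed.

Lemma layer_tmv X (i : 'I_n) : total_mutual_visibility_set H X ->
  total_mutual_visibility_set e ([set g | (g, i) \in X] :|: simplicial_set e).
Proof.
move=> hX u v; have [p [hs hi]] := hX (u, i) (v, i).
have [ha hs'] := same_layer hs.
exists (map fst p); split=> //.
rewrite internal_map; apply/allP=> x /mapP [y yi ->].
have yp : y \in p by move: yi; rewrite /internal => /mem_take.
have /eqP y2 := allP ha y yp.
rewrite /simplicial_set !inE negb_or; apply/andP; split.
  by move/allP: hi => /(_ y yi); case: y y2 {yi yp} => a b /= ->.
move: (allP (shortest_internal e_sym hs') y.1); rewrite internal_map.
  by move=> /(_ (map_f _ yi)).
Qed.

Lemma no_anti X a b i j : total_mutual_visibility_set H X ->
  a != b -> e a b -> i != j -> (a, j) \in X -> (b, i) \in X -> False.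
Proof.
move=> hX nab eab nij aj bi.
have [p [[/andP[pp /eqP lp] hmin] hi]] := hX (a, i) (b, j).
have : size p <= 2.
  apply: (hmin [:: (a, j); (b, j)]).
  by rewrite /is_walk /= /cart_Kn /= eqxx nij eab !eqxx /= orbT.
case: p pp lp hmin hi => [|y [|z [|w p]]] //=.
- by move=> _ [] /eqP; rewrite (negbTE nab).
- by move=> /andP[h _] yb; move: h; rewrite yb /cart_Kn /= (negbTE nab) (negbTE nij) !andbF.
- move=> h zb; subst z; move: h => /and3P[h1 h2 _] _ /andP[yX _] _.
  move: h1 h2; rewrite /cart_Kn /=; case: y yX => c k /= yX.
  case/orP=> /andP[/eqP ac ik]; case/orP=> /andP[/eqP cb kj].
  + by move: nab; rewrite ac cb eqxx.
  + by move: yX; rewrite -ac (eqP kj) aj.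
  + by move: yX; rewrite cb -(eqP ik) bi.
  + by move: nij; rewrite (eqP ik) (eqP kj) eqxx.
Qed.

Lemma vis_construct (X : {set T * 'I_n}) : connected_graph e ->
  (forall x, x \in X -> simplicial e x.1) ->
  (forall a b i j, a != b -> e a b -> i != j -> (a, j) \in X -> (b, i) \in X -> False) ->
  total_mutual_visibility_set H X.
Proof.
move=> conn hS hA [a i] [b j].
have [q hq] := exists_shortest (conn a b).
have [/andP[pq /eqP lq] qmin] := hq.
have lb : forall p, is_walk H (a, i) (b, j) p -> size q + (i != j) <= size p.
  move=> p /andP[pp /eqP lp]; have [q' [pq' lq' sq']] := walk_lb pp.
  have hqq : size q <= size q' by apply: qmin; rewrite /is_walk pq' lq' lp eqxx.
  have hk : (i != j) <= kk (a, i) (last (a, i) p) p by rewrite lp /kk /=; case: (i != j).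
  exact: leq_trans (leq_add hqq hk) sq'.
have nsX : forall k s, all (fun x => ~~ simplicial e x) s -> all (fun y => y \notin X) (lift k s).
  move=> k s /allP h; apply/allP=> y /mapP [x xs ->]; apply/negP=> /hS /=; apply/negP; exact: h.
have iq := shortest_internal e_sym hq.
have [eij|nij] := eqVneq i j.
  subst j; exists (lift i q); split; last by rewrite internal_map nsX.
  split; first exact: lift_walk hq.1.
  by move=> p /lb; rewrite eqxx addn0 size_map.
have [eab|nab] := eqVneq a b.
  subst a; exists [:: (b, j)]; split=> //; split.
    by rewrite /is_walk /= /cart_Kn /= !eqxx nij.
  by move=> p /lb; rewrite nij addn1 => h; apply: leq_trans h.
have [q0 qe] : exists q0, q = rcons q0 b.
  case E: q lq => [|x q'] /= lq'; first by move: nab; rewrite lq' eqxx.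
  by exists (belast x q'); rewrite lastI lq'.
rewrite qe internal_rcons in iq; rewrite qe in pq.
have sq : size q = (size q0).+1 by rewrite qe size_rcons.
case ajX: ((a, j) \in X); last first.
  exists ((a, j) :: lift j q); split; last first.
    by rewrite qe /lift map_rcons -rcons_cons internal_rcons /= ajX nsX.
  split; last by move=> p /lb; rewrite nij addn1 /= size_map.
  rewrite /is_walk /= {1}/cart_Kn /= eqxx nij /= qe lift_path //.
  by rewrite last_lift last_rcons eqxx.
case biX: ((b, i) \in X); last first.
  exists (rcons (lift i q) (b, j)); split; last first.
    by rewrite internal_rcons qe /lift map_rcons all_rcons biX nsX.
  split; last by move=> p /lb; rewrite nij addn1 size_rcons size_map.
  rewrite /is_walk rcons_path qe lift_path // last_lift last_rcons last_rcons eqxx andbT.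
  by rewrite /cart_Kn /= eqxx nij.
case: q0 qe iq pq sq => [|c q1] qe iq pq sq.
  by exfalso; apply: (hA a b i j nab _ nij ajX biX); move: pq => /= /andP[].
move: pq => /= /andP[eac pc].
have ic : ~~ simplicial e c by case/andP: iq.
have iq1 : all (fun x => ~~ simplicial e x) q1 by case/andP: iq.
have cX : forall k, (c, k) \notin X by move=> k; apply/negP=> /hS /=; apply/negP: ic.
exists ((c, i) :: (c, j) :: lift j (rcons q1 b)); split; last first.
  by rewrite /lift map_rcons -!rcons_cons internal_rcons /= !cX nsX.
split; last first.
  by move=> p /lb; rewrite nij addn1 sq /= size_map size_rcons.
rewrite /is_walk /= {1 2}/cart_Kn /= eac !eqxx nij /= lift_path //.
by rewrite last_lift last_rcons !eqxx orbT.
Qed.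

End H.

Lemma grid (A B : finType) (Y : {set A * B}) (C : {set A}) :
  {in Y, forall y, y.1 \in C} ->
  {in Y &, forall y y', (y.1 == y'.1) || (y.2 == y'.2)} ->
  #|Y| <= maxn #|C| #|B|.
Proof.
move=> hC hY.
have [->|[y0 y0Y]] := set_0Vmem Y; first by rewrite cards0.
case: (boolP [forall y in Y, y.1 == y0.1]) => [/forall_inP h1|].
  rewrite -(@card_in_imset _ _ snd); last first.
    move=> [a b] [c d] /h1 /= /eqP -> /h1 /= /eqP -> /= ->; done.
  by apply: leq_trans (max_card _) _; rewrite leq_maxr.
rewrite negb_forall_in => /exists_inP [y1 y1Y ny1].
have y12 : y1.2 == y0.2 by move: (hY _ _ y1Y y0Y); rewrite (negbTE ny1).
have h2 : {in Y, forall y, y.2 == y0.2}.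
  move=> y yY; apply/negPn/negP=> ny.
  move: (hY _ _ yY y0Y) (hY _ _ yY y1Y); rewrite (negbTE ny) (eqP y12) (negbTE ny) !orbF.
  by move=> /eqP -> /eqP h; move: ny1; rewrite h eqxx.
rewrite -(@card_in_imset _ _ fst); last first.
  move=> [a b] [c d] /h2 /= /eqP -> /h2 /= /eqP -> /= ->; done.
apply: leq_trans (subset_leq_card _) (leq_maxl _ _).
by apply/subsetP=> x /imsetP [y yY ->]; apply: hC.
Qed.

Section K.
Variable T : finType.
Variable e : rel T.
Hypothesis e_sym : symmetric e.
Local Notation S := (simplicial_set e).

Definition cls (g : T) : {set T} :=
  [set g' in S | closed_nbhd e g' == closed_nbhd e g].

Lemma tc_cls : twin_classes e = [set cls g | g in S].
Proof. by []. Qed.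

Lemma cls_self g : g \in S -> g \in cls g.
Proof. by move=> gS; rewrite inE gS eqxx. Qed.

Lemma cls_mem g h : h \in cls g -> cls h = cls g.
Proof.
by rewrite inE => /andP[_ /eqP hN]; apply/setP=> x; rewrite !inE hN.
Qed.

Lemma cls_N g h : h \in cls g -> closed_nbhd e h = closed_nbhd e g.
Proof. by rewrite inE => /andP[_ /eqP]. Qed.

Lemma card_part n (X : {set T * 'I_n}) : {in X, forall x, x.1 \in S} ->
  #|X| = \sum_(C in twin_classes e) #|[set x in X | cls x.1 == C]|.
Proof.
move=> hX; rewrite -sum1_card (partition_big (fun x => cls x.1) (mem (twin_classes e))).
  apply: eq_bigr => C _; rewrite -sum1_card; apply: eq_bigl => x; by rewrite !inE.
by move=> x xX; rewrite tc_cls; apply/imsetP; exists x.1 => //; apply: hX.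
Qed.

Definition rep g := odflt g [pick y in cls g].

Lemma rep_in g : g \in S -> rep g \in cls g.
Proof.
move=> gS; rewrite /rep; case: pickP => [y //|h0].
by move: (h0 g); rewrite cls_self.
Qed.

Lemma rep_eq g h : g \in S -> cls g = cls h -> rep g = rep h.
Proof.
move=> gS E; rewrite /rep E; case: pickP => [y //|h0].
by move: (h0 g); rewrite -E cls_self.
Qed.

End K.

Theorem theorem5p9 (T : finType) (e : rel T)
  (e_sym : symmetric e) (e_irr : irreflexive e)
  (G_conn : connected_graph e)
  (h_mu : mu_t_is e #|simplicial_set e|)
  (n : nat) (hn : 2 <= n) :
  mu_t_is (cart_Kn e n) (\sum_(C in twin_classes e) maxn #|C| n).
Proof.
have ub : forall X, total_mutual_visibility_set (cart_Kn e n) X ->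
    #|X| <= \sum_(C in twin_classes e) maxn #|C| n.
  move=> X hX.
  have XS : {in X, forall x, x.1 \in simplicial_set e}.
    move=> x xX; have hc := h_mu.2 _ (layer_tmv e_sym x.2 hX).
    have E : simplicial_set e == [set g | (g, x.2) \in X] :|: simplicial_set e.
      by rewrite eqEcard subsetUr hc.
    by rewrite (eqP E) !inE -surjective_pairing xX.
  rewrite (card_part XS); apply: leq_sum => C; rewrite tc_cls => /imsetP [a aS ->].
  apply: (@leq_trans (maxn #|cls e a| #|'I_n|)); last by rewrite card_ord.
  apply: grid.
    move=> y; rewrite inE => /andP[yX /eqP <-]; exact: cls_self (XS _ yX).
  move=> [y1 y2] [z1 z2]; rewrite !inE /= => /andP[yX /eqP ya] /andP[zX /eqP za].
  have [//|nyz] := eqVneq y1 z1; rewrite /=.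
  have eyz : e y1 z1.
    have : z1 \in closed_nbhd e z1 by rewrite inE eqxx.
    have Nz : closed_nbhd e z1 = closed_nbhd e a by apply: cls_N; rewrite -za cls_self // (XS _ zX).
    have Ny : closed_nbhd e y1 = closed_nbhd e a by apply: cls_N; rewrite -ya cls_self // (XS _ yX).
    rewrite Nz -Ny.
    by rewrite inE eq_sym (negbTE nyz).
  apply/negPn/negP => n12.
  by apply: (no_anti hX nyz eyz _ yX zX); rewrite eq_sym.
split; last exact: ub.
have n0 : 0 < n by apply: ltnW.
pose i0 : 'I_n := Ordinal n0.
pose X0 := [set x : T * 'I_n | (x.1 \in simplicial_set e) &&
   (if n <= #|cls e x.1| then x.2 == i0 else x.1 == rep e x.1)].
have X0S : {in X0, forall x, x.1 \in simplicial_set e}.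
  by move=> x; rewrite inE => /andP[].
have htmv : total_mutual_visibility_set (cart_Kn e n) X0.
  apply: vis_construct => //.
    by move=> x /X0S; rewrite inE.
  move=> a b i j nab eab nij; rewrite !inE /= => /andP[aS ca] /andP[bS cb].
  have Nab : closed_nbhd e a = closed_nbhd e b.
    exact: simp_twins.
  have Cab : cls e a = cls e b by apply/setP=> x; rewrite !inE Nab.
  have aS' : a \in simplicial_set e by rewrite inE.
  move: ca cb; rewrite Cab (rep_eq aS' Cab); case: ifP => _.
    by move=> /eqP ja /eqP ib; move: nij; rewrite ja ib eqxx.
  by move=> /eqP ar /eqP br; move: nab; rewrite ar -br eqxx.
exists X0; split=> //; apply/eqP; rewrite eqn_leq ub //=.
rewrite (card_part X0S); apply: leq_sum => C; rewrite tc_cls => /imsetP [a aS ->].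
case: (leqP n #|cls e a|) => hc.
  rewrite -(@card_imset _ _ (fun g => (g, i0))); last by move=> x y [].
  apply: subset_leq_card; apply/subsetP=> x /imsetP [g gC ->].
  have gS : g \in simplicial_set e by move: gC; rewrite inE => /andP[].
  rewrite !inE /= (cls_mem gC) hc !eqxx !andbT; by move: gS; rewrite inE.

rewrite -{1}(card_ord n) -cardsT -(@card_imset _ _ (fun i => (rep e a, i))); last by move=> x y [].
apply: subset_leq_card; apply/subsetP=> x /imsetP [i _ ->].
have rC := rep_in aS.
have rS : rep e a \in simplicial_set e by move: rC; rewrite inE => /andP[].
rewrite !inE /= (cls_mem rC) (rep_eq rS (cls_mem rC)) eqxx leqNgt hc andbT.
by rewrite eqxx andbT; move: rS; rewrite inE.

Qed.
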